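(* For every $n\ge1$, the affine curvatures of the inflection-point polygon $r_1,\dots,r_{N(n)}$ of the Hilbert curve $H_n$ satisfy, for all $2\le k\le N(n)-2$, $$\kappa_k\in\{1,-1,2,-2,\tfrac12,-\tfrac12,3,\tfrac13\},\qquad \bar\kappa_k=0.$$
   Context: The Hilbert curve at step $n$ is the polygon $H_n$ in the unit square defined recursively: $H_1$ has vertices $(\tfrac14,\tfrac14),(\tfrac14,\tfrac34),(\tfrac34,\tfrac34),(\tfrac34,\tfrac14)$; $H_{n+1}$ is the concatenation (in this order, joined by the connecting edges) of $f_1(H_n),f_2(H_n),f_3(H_n),f_4(H_n)$, where $f_1(x,y)=(\tfrac y2,\tfrac x2)$, $f_2(x,y)=(\tfrac x2,\tfrac y2+\tfrac12)$, $f_3(x,y)=(\tfrac x2+\tfrac12,\tfrac y2+\tfrac12)$, $f_4(x,y)=(1-\tfrac y2,\tfrac12-\tfrac x2)$, each copy traversed in the order inherited from $H_n$. The inflection points $r_1,\dots,r_{N(n)}$ of $H_n$ are the vertices of $H_n$, in order, after deleting every interior vertex whose two neighbouring vertices are collinear with it (endpoints kept). Affine curvatures: $t_k=r_{k+1}-r_k$, $[a,b]=a_1b_2-a_2b_1$, and for $2\le k\le N-2$ with $[t_{k-1},t_k]\ne0$, $\kappa_k=\dfrac{[t_k,t_{k+1}]}{[t_{k-1},t_k]}$, $\bar\kappa_k=\dfrac{[t_{k-1},t_{k+1}]}{[t_{k-1},t_k]}$. *)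

(* Defs.v *)
From HB Require Import structures.
From mathcomp Require Import all_boot all_order all_algebra.
Set Implicit Arguments. Unset Strict Implicit. Unset Printing Implicit Defensive.
Import Order.TTheory GRing.Theory Num.Theory.
Local Open Scope ring_scope.

Definition pt := (rat * rat)%type.
Definition pt0 : pt := (0, 0).

Definition psub (p q : pt) : pt := (p.1 - q.1, p.2 - q.2).
Definition cross (a b : pt) : rat := a.1 * b.2 - a.2 * b.1.

Definition H1 : seq pt :=
  [:: (1/4, 1/4); (1/4, 3/4); (3/4, 3/4); (3/4, 1/4)].

Definition f1 (p : pt) : pt := (p.2 / 2, p.1 / 2).
Definition f2 (p : pt) : pt := (p.1 / 2, p.2 / 2 + 1/2).
Definition f3 (p : pt) : pt := (p.1 / 2 + 1/2, p.2 / 2 + 1/2).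
Definition f4 (p : pt) : pt := (1 - p.2 / 2, 1/2 - p.1 / 2).

(* hilb_aux m = vertex list of H_(m+1) *)
Fixpoint hilb_aux (m : nat) : seq pt :=
  match m with
  | 0%N => H1
  | m'.+1 => let H := hilb_aux m' in
             map f1 H ++ map f2 H ++ map f3 H ++ map f4 H
  end.

Definition hilbert (n : nat) : seq pt := hilb_aux n.-1.

(* Inflection points: delete every interior vertex collinear with its two
   neighbouring vertices (neighbours taken in the original vertex list);
   endpoints are kept. *)
Definition keep (s : seq pt) (i : nat) : bool :=
  (i == 0%N) || (i == (size s).-1) ||
  (cross (psub (nth pt0 s i) (nth pt0 s i.-1))
         (psub (nth pt0 s i.+1) (nth pt0 s i)) != 0).

Definition inflections (s : seq pt) : seq pt :=
  [seq nth pt0 s i | i <- iota 0 (size s) & keep s i].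

(* 1-based r_k *)
Definition rpt (n k : nat) : pt := nth pt0 (inflections (hilbert n)) k.-1.
Definition Ninf (n : nat) : nat := size (inflections (hilbert n)).

Definition tvec (n k : nat) : pt := psub (rpt n k.+1) (rpt n k).

Definition kappa (n k : nat) : rat :=
  cross (tvec n k) (tvec n k.+1) / cross (tvec n k.-1) (tvec n k).
Definition kappabar (n k : nat) : rat :=
  cross (tvec n k.-1) (tvec n k.+1) / cross (tvec n k.-1) (tvec n k).

(* Main.v *)
Require Import Defs.
From HB Require Import structures.
From mathcomp Require Import all_boot all_order all_algebra.
From mathcomp Require Import ring.
Import Order.TTheory GRing.Theory Num.Theory.
Local Open Scope ring_scope.

Definition padd (p q : pt) : pt := (p.1 + q.1, p.2 + q.2).

Fixpoint gs (acc e : pt) (l : seq pt) : seq pt :=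
  match l with
  | [::] => [:: acc]
  | e' :: l' => if cross e e' == 0 then gs (padd acc e') e' l' else acc :: gs e' e' l'
  end.

Definition groups (l : seq pt) : seq pt :=
  if l is e :: l' then gs e e l' else [::].

Lemma gs_cat l acc e : exists G g, gs acc e l = rcons G g /\
  forall X, gs acc e (l ++ X) = G ++ gs g (last e l) X.
Proof.
elim: l acc e => [|e' l IH] acc e /=; first by exists [::], acc.
case: ifP => _.
- have [G [g [H1 H2]]] := IH (padd acc e') e'.
  by exists G, g; split.
- have [G [g [H1 H2]]] := IH e' e'.
  by exists (acc :: G), g; split => [|X]; rewrite ?H1 ?H2.
Qed.

Lemma paddA p q r : padd p (padd q r) = padd (padd p q) r.
Proof. by rewrite /padd /= !addrA. Qed.

Lemma gs_shift l acc e y ys d : gs acc e l = y :: ys ->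
  gs (padd d acc) e l = padd d y :: ys.
Proof.
elim: l acc e y ys => [|e' l IH] acc e y ys /=; first by case=> -> ->.
case: ifP => _; last by case=> -> ->.
by move=> H; rewrite -paddA; apply: IH.
Qed.

Definition mrg (la j hb g h : pt) : seq pt :=
  if cross la j == 0 then
    (if cross j hb == 0 then [:: padd (padd g j) h] else [:: padd g j; h])
  else (if cross j hb == 0 then [:: g; padd j h] else [:: g; j; h]).

Lemma groups_cat A j B GA g h GB :
  A != [::] -> B != [::] -> groups A = rcons GA g -> groups B = h :: GB ->
  groups (A ++ j :: B) =
    GA ++ mrg (last pt0 A) j (head pt0 B) g h ++ GB.
Proof.
case: A => [//|a A] _; case: B => [//|b B] _ /=.
have [G [g' [H1 H2]]] := gs_cat A a a.
rewrite H1 H2 => /eqP; rewrite eqseq_rcons => /andP [/eqP <- /eqP <-] HB.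
congr (_ ++ _); rewrite /= /mrg.
case: ifP => _; case: ifP => _ /=.
- exact: (@gs_shift _ _ _ _ _ (padd g' j) HB).
- by rewrite HB.
- by rewrite (@gs_shift _ _ _ _ _ j HB).
- by rewrite HB.
Qed.

Lemma gs_map (f : pt -> pt) (k : rat) :
  (forall a b, cross (f a) (f b) = k * cross a b) -> k != 0 ->
  (forall a b, f (padd a b) = padd (f a) (f b)) ->
  forall l acc e, gs (f acc) (f e) (map f l) = map f (gs acc e l).
Proof.
move=> Hc Hk Ha; elim=> [|e' l IH] acc e //=.
rewrite Hc mulf_eq0 (negbTE Hk) /=.
by case: ifP => _; rewrite /= -?IH ?Ha.
Qed.

Lemma groups_map (f : pt -> pt) (k : rat) :
  (forall a b, cross (f a) (f b) = k * cross a b) -> k != 0 ->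
  (forall a b, f (padd a b) = padd (f a) (f b)) ->
  forall l, groups (map f l) = map f (groups l).
Proof. by move=> Hc Hk Ha [|e l] //=; rewrite (@gs_map f k Hc Hk Ha). Qed.

Definition Sset : seq rat := [:: 1; -1; 2; -2; 1/2; -(1/2); 3; 1/3].

Definition P3 (a b c : pt) : bool :=
  [&& cross a b != 0, cross a c == 0 & cross b c / cross a b \in Sset].

Fixpoint good (l : seq pt) : bool :=
  match l with
  | a :: ((b :: c :: _) as l') => P3 a b c && good l'
  | _ => true
  end.

Lemma goodE a b c r : good [:: a, b, c & r] = P3 a b c && good [:: b, c & r].
Proof. by []. Qed.

Lemma good_cons x l : good (x :: l) -> good l.
Proof. by case: l => [|b [|c r]] // /andP[]. Qed.

Lemma good_suffix X Y : good (X ++ Y) -> good Y.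
Proof. by elim: X => // x X IH; rewrite cat_cons => /good_cons. Qed.

Lemma good_prefix X Y : good (X ++ Y) -> good X.
Proof.
elim: X => // x [|x' [|x'' X]] IH //.
rewrite !cat_cons goodE -!cat_cons => /andP[H /IH].
by rewrite goodE H.
Qed.

Lemma good_join X p q Y : good (X ++ [:: p; q]) -> good [:: p, q & Y] ->
  good (X ++ [:: p, q & Y]).
Proof.
elim: X => // x [|x' [|x'' X]] IH H1 H2.
- by move: H1; rewrite cat_cons !goodE => /andP[-> _].
- by move: H1; rewrite !cat_cons !goodE /= => /andP[-> /andP[-> _]].
- move: H1; rewrite !cat_cons !goodE -!cat_cons => /andP[-> /IH H].
  by rewrite H.
Qed.

Lemma good_splice X p q M r s Y :
  good (X ++ [:: p; q]) -> good ([:: p; q] ++ M ++ [:: r; s]) -> good [:: r, s & Y] ->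
  good (X ++ [:: p, q & M ++ [:: r, s & Y]]).
Proof.
move=> H1 H2 H3; apply: good_join => //.
have -> : [:: p, q & M ++ [:: r, s & Y]] = ([:: p, q & M]) ++ [:: r, s & Y] by [].
by apply: good_join.
Qed.

Lemma good_nth T i : good T -> (i.+2 < size T)%N ->
  P3 (nth pt0 T i) (nth pt0 T i.+1) (nth pt0 T i.+2).
Proof.
elim: T i => // a [|b [|c r]] IH [|i] //=.
- by case/andP.
- by case/andP => _ /IH H /H.
Qed.

Lemma P3_map (f : pt -> pt) (k : rat) :
  (forall a b, cross (f a) (f b) = k * cross a b) -> k != 0 ->
  forall a b c, P3 (f a) (f b) (f c) = P3 a b c.
Proof.
move=> Hc Hk a b c; rewrite /P3 !Hc !mulf_eq0 (negbTE Hk) /=.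
case: (cross a b =P 0) => //= Hab.
by rewrite invfM mulrACA mulfV // mul1r.
Qed.

Lemma good_map (f : pt -> pt) (k : rat) :
  (forall a b, cross (f a) (f b) = k * cross a b) -> k != 0 ->
  forall l, good (map f l) = good l.
Proof.
move=> Hc Hk; elim=> // a [|b [|c r]] IH //.
by rewrite map_cons !goodE (@P3_map f k Hc Hk) -IH.
Qed.


Fixpoint irec (a b : pt) (r : seq pt) : seq pt :=
  match r with
  | [::] => [:: b]
  | c :: r' => if cross (psub b a) (psub c b) != 0 then b :: irec b c r'
               else irec b c r'
  end.

Lemma irecE r : forall P a b,
  [seq nth pt0 (P ++ [:: a, b & r]) i | i <- iota (size P).+1 (size r).+1
     & keep (P ++ [:: a, b & r]) i] = irec a b r.
Proof.
elim: r => [|c r IH] P a b.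
- rewrite /= /keep size_cat /= addn2 eqxx /=.
  by rewrite nth_cat ltnNge leqnSn /= subSnn.
- rewrite (_ : iota (size P).+1 (size (c::r)).+1 =
     (size P).+1 :: iota (size P).+2 (size r).+1) // -[_ :: iota _ _]cat1s filter_cat map_cat.
  have Hk : keep (P ++ [:: a, b, c & r]) (size P).+1 =
            (cross (psub b a) (psub c b) != 0).
    rewrite /keep size_cat /= !nth_cat ltnn subnn /= ltnNge leqnSn /=.
    rewrite (_ : (size P).+1 - size P = 1)%N ?subSnn //.
    rewrite (_ : ((size P).+2 < size P)%N = false); last by rewrite ltnNge ltnW.
    rewrite (_ : ((size P).+2 - size P)%N = 2%N); last by rewrite -addn2 addKn.
    have -> : ((size P).+1 == (size P + (size r).+3).-1) = false.
      by apply/negbTE; rewrite addnS /= -addn1 eqn_add2l.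
    by [].
  have := IH (rcons P a) b c.
  rewrite size_rcons -cats1 -catA /= => ->.
  rewrite Hk; case: ifP => //= _.
  by rewrite nth_cat ltnNge leqnSn /= subSnn.
Qed.

Lemma inflE x y r : inflections [:: x, y & r] = x :: irec x y r.
Proof.
rewrite /inflections (_ : iota 0 (size [:: x, y & r]) = 0%N :: iota 1 (size r).+1) //.
rewrite -[_ :: iota _ _]cat1s filter_cat map_cat.
by have := irecE r [::] x y; rewrite /= => ->.
Qed.

Definition edges (s : seq pt) : seq pt :=
  if s is x :: r then pairmap (fun p q => psub q p) x r else [::].

Lemma irec_gs r : forall a b p,
  pairmap (fun p q => psub q p) p (irec a b r) =
  gs (psub b p) (psub b a) (pairmap (fun p q => psub q p) b r).
Proof.
elim: r => [|c r IH] a b p //=.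
case: ifP => /= H; rewrite IH.
- by rewrite (negbTE H).
- rewrite (negbFE H); congr gs.
  by rewrite /padd /psub /=; congr pair; ring.
Qed.

Lemma T_infl x y r :
  pairmap (fun p q => psub q p) x (behead (inflections [:: x, y & r])) =
  groups (edges [:: x, y & r]).
Proof. by rewrite inflE /= irec_gs. Qed.


Definition dU : pt := (0, 1).
Definition dR : pt := (1, 0).
Definition dD : pt := (0, -1).
Definition dL : pt := (-1, 0).
Definition sw (p : pt) : pt := (p.2, p.1).
Definition nsw (p : pt) : pt := (- p.2, - p.1).
Definition scale (k : rat) (p : pt) : pt := (k * p.1, k * p.2).

Fixpoint Dl (m : nat) : seq pt :=
  match m with
  | 0%N => [:: dU; dR; dD]
  | m'.+1 => let D := Dl m' in map sw D ++ dU :: D ++ dR :: D ++ dD :: map nsw D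
  end.

Lemma DlS m : Dl m.+1 =
  map sw (Dl m) ++ dU :: Dl m ++ dR :: Dl m ++ dD :: map nsw (Dl m).
Proof. by []. Qed.

Fixpoint uu (m : nat) : rat := if m is m'.+1 then uu m' / 2 else 1/2.

Lemma edges_cat A B : A != [::] -> B != [::] ->
  edges (A ++ B) = edges A ++ psub (head pt0 B) (last pt0 A) :: edges B.
Proof. by case: A => [//|a A]; case: B => [//|b B] _ _; rewrite /= pairmap_cat. Qed.

Lemma edges_map (f g : pt -> pt) :
  (forall p q, psub (f q) (f p) = g (psub q p)) ->
  forall s, edges (map f s) = map g (edges s).
Proof.
move=> H [|x r] //=; elim: r x => [|y r IH] x //=.
by rewrite H IH.
Qed.

Lemma head_map0 f s : s != [::] -> head pt0 (map f s) = f (head pt0 s).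
Proof. by case: s. Qed.

Lemma last_map0 f s : s != [::] -> last pt0 (map f s) = f (last pt0 s).
Proof. by case: s => // x s _; rewrite /= last_map. Qed.

Lemma map_nil0 (f : pt -> pt) s : s != [::] -> map f s != [::].
Proof. by case: s. Qed.

Lemma cat_nil0 (s t : seq pt) : s != [::] -> s ++ t != [::].
Proof. by case: s. Qed.

Lemma pairE (a b c d : rat) : a = c -> b = d -> ((a, b) : pt) = (c, d).
Proof. by move=> -> ->. Qed.

Lemma head_cat0 (s t : seq pt) : s != [::] -> head pt0 (s ++ t) = head pt0 s.
Proof. by case: s. Qed.

Lemma last_cat0 (s t : seq pt) : t != [::] -> last pt0 (s ++ t) = last pt0 t.
Proof. by case: t => // x t _; rewrite last_cat. Qed.

Definition g1 (v : pt) : pt := (v.2 / 2, v.1 / 2).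
Definition g2 (v : pt) : pt := (v.1 / 2, v.2 / 2).
Definition g4 (v : pt) : pt := (- (v.2 / 2), - (v.1 / 2)).

Lemma E1 p q : psub (f1 q) (f1 p) = g1 (psub q p).
Proof. by rewrite /psub /g1 /=; apply: pairE; field. Qed.
Lemma E2 p q : psub (f2 q) (f2 p) = g2 (psub q p).
Proof. by rewrite /psub /g2 /=; apply: pairE; field. Qed.
Lemma E3 p q : psub (f3 q) (f3 p) = g2 (psub q p).
Proof. by rewrite /psub /g2 /=; apply: pairE; field. Qed.
Lemma E4 p q : psub (f4 q) (f4 p) = g4 (psub q p).
Proof. by rewrite /psub /g4 /=; apply: pairE; field. Qed.

Lemma hilbE m :
  [/\ hilb_aux m != [::],
      edges (hilb_aux m) = map (scale (uu m)) (Dl m),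
      head pt0 (hilb_aux m) = (uu m / 2, uu m / 2) &
      last pt0 (hilb_aux m) = (1 - uu m / 2, uu m / 2)].
Proof.
elim: m => [|m [Hn He Hh Hl]].
- by split.
set H := hilb_aux m.
have -> : hilb_aux m.+1 = map f1 H ++ map f2 H ++ map f3 H ++ map f4 H by [].
have N := fun f => @map_nil0 f _ Hn.
split.
- by apply: cat_nil0.
- rewrite !edges_cat ?cat_nil0 //.
  rewrite !head_cat0 ?N // !head_map0 // !last_map0 // Hh Hl.
  rewrite (@edges_map _ _ E1) (@edges_map _ _ E2) (@edges_map _ _ E3) (@edges_map _ _ E4) He.
  rewrite DlS !map_cat !map_cons !map_cat !map_cons !map_cat -!map_comp.
  have P1 v : g1 (scale (uu m) v) = scale (uu m.+1) (sw v).
    by rewrite /g1 /scale /sw /=; apply: pairE; field.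
  have P2 v : g2 (scale (uu m) v) = scale (uu m.+1) v.
    by rewrite /g2 /scale /=; apply: pairE; field.
  have P4 v : g4 (scale (uu m) v) = scale (uu m.+1) (nsw v).
    by rewrite /g4 /scale /nsw /=; apply: pairE; field.
  rewrite (eq_map P1) (eq_map P2) (eq_map P4) /= -!map_comp.
  congr (_ ++ _); congr (_ :: _); [|congr (_ ++ _); congr (_ :: _); [|congr (_ ++ _); congr (_ :: _)]].
  + by rewrite /psub /scale /= /dU; apply: pairE; field.
  + by rewrite /psub /scale /= /dR; apply: pairE; field.
  + by rewrite /psub /scale /= /dD; apply: pairE; field.
- by rewrite head_cat0 ?N // head_map0 // Hh /=.
- by rewrite !last_cat0 ?N ?cat_nil0 ?N // last_map0 // Hl /f4 /=; apply: pairE; field.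
Qed.


Lemma cross_sw a b : cross (sw a) (sw b) = -1 * cross a b.
Proof. by rewrite /cross /sw /=; ring. Qed.
Lemma cross_nsw a b : cross (nsw a) (nsw b) = -1 * cross a b.
Proof. by rewrite /cross /nsw /=; ring. Qed.
Lemma add_sw a b : sw (padd a b) = padd (sw a) (sw b).
Proof. by []. Qed.
Lemma add_nsw a b : nsw (padd a b) = padd (nsw a) (nsw b).
Proof. by rewrite /nsw /padd /=; apply: pairE; ring. Qed.
Lemma m1nz : (-1 : rat) != 0. Proof. by []. Qed.

Lemma groups_sw l : groups (map sw l) = map sw (groups l).
Proof. exact: (@groups_map sw (-1) cross_sw m1nz add_sw). Qed.
Lemma groups_nsw l : groups (map nsw l) = map nsw (groups l).
Proof. exact: (@groups_map nsw (-1) cross_nsw m1nz add_nsw). Qed.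
Lemma good_sw l : good (map sw l) = good l.
Proof. exact: (@good_map sw (-1) cross_sw m1nz). Qed.
Lemma good_nsw l : good (map nsw l) = good l.
Proof. exact: (@good_map nsw (-1) cross_nsw m1nz). Qed.

Lemma last_ne (x : pt) s : s != [::] -> last x s = last pt0 s.
Proof. by case: s. Qed.

Lemma step D a1 a2 a3 b3 b2 b1 mid hd lst :
 D != [::] -> head pt0 D = hd -> last pt0 D = lst ->
 groups D = [:: a1, a2, a3 & mid ++ [:: b3; b2; b1]] -> good (groups D) ->
 good ([:: sw b3; sw b2] ++ mrg (sw lst) dU hd (sw b1) a1 ++ [:: a2; a3]) ->
 good ([:: b3; b2] ++ mrg lst dR hd b1 a1 ++ [:: a2; a3]) ->
 good ([:: b3; b2] ++ mrg lst dD (nsw hd) b1 (nsw a1) ++ [:: nsw a2; nsw a3]) ->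
 let D' := map sw D ++ dU :: D ++ dR :: D ++ dD :: map nsw D in
 [/\ D' != [::], head pt0 D' = sw hd, last pt0 D' = nsw lst,
   exists mid', groups D' = [:: sw a1, sw a2, sw a3 & mid' ++ [:: nsw b3; nsw b2; nsw b1]]
   & good (groups D')].
Proof.
move=> Dn Hh Hl HG Hg W1 W2 W3 D'.
set GDt := [:: a2, a3 & mid ++ [:: b3; b2]].
have G1 : groups D = rcons (a1 :: GDt) b1 by rewrite HG -cats1 /= -catA.
have G2 : groups D = a1 :: (GDt ++ [:: b1]) by rewrite HG /= -catA.
have Nsw := @map_nil0 sw _ Dn; have Nnsw := @map_nil0 nsw _ Dn.
have G3 : groups (D ++ dD :: map nsw D) =
   (a1 :: GDt) ++ mrg lst dD (nsw hd) b1 (nsw a1) ++ map nsw (GDt ++ [:: b1]).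
  rewrite (@groups_cat D dD (map nsw D) _ _ (nsw a1) (map nsw (GDt ++ [:: b1])) Dn Nnsw G1).
  - by rewrite head_map0 // Hh Hl.
  - by rewrite groups_nsw G2.
have G4 : groups (D ++ dR :: D ++ dD :: map nsw D) =
   (a1 :: GDt) ++ mrg lst dR hd b1 a1 ++
   (GDt ++ mrg lst dD (nsw hd) b1 (nsw a1) ++ map nsw (GDt ++ [:: b1])).
  rewrite (@groups_cat D dR _ _ _ _ _ Dn (@cat_nil0 D _ Dn) G1 G3).
  by rewrite head_cat0 // Hh Hl.
have G5 : groups D' =
   map sw (a1 :: GDt) ++ mrg (sw lst) dU hd (sw b1) a1 ++
   (GDt ++ mrg lst dR hd b1 a1 ++
   (GDt ++ mrg lst dD (nsw hd) b1 (nsw a1) ++ map nsw (GDt ++ [:: b1]))).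
  rewrite /D' (@groups_cat (map sw D) dU _ (map sw (a1 :: GDt)) (sw b1) _ _ Nsw (@cat_nil0 D _ Dn) _ G4).
  - by rewrite last_map0 // head_cat0 // Hh Hl.
  - by rewrite groups_sw G1 map_rcons.
split.
- by rewrite /D' cat_nil0.
- by rewrite /D' head_cat0 // head_map0 // Hh.
- by rewrite /D' !last_cat /= !last_cat /= !last_cat /= (@last_ne _ _ Nnsw) last_map0 // Hl.
- exists (map sw mid ++ [:: sw b3; sw b2] ++ mrg (sw lst) dU hd (sw b1) a1 ++ GDt ++
     mrg lst dR hd b1 a1 ++ GDt ++ mrg lst dD (nsw hd) b1 (nsw a1) ++
     [:: nsw a2; nsw a3] ++ map nsw mid).
  by rewrite G5 /GDt /= !map_cat; do 6 rewrite /= -?catA.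
- rewrite G5.
  set M1 := mrg _ dU _ _ _; set M2 := mrg _ dR _ _ _; set M3 := mrg _ dD _ _ _.
  have -> : map sw (a1 :: GDt) ++ M1 ++ (GDt ++ M2 ++ (GDt ++ M3 ++ map nsw (GDt ++ [:: b1]))) =
    map sw [:: a1, a2, a3 & mid] ++ [:: sw b3, sw b2 & M1 ++ [:: a2, a3 &
      mid ++ [:: b3, b2 & M2 ++ [:: a2, a3 &
      mid ++ [:: b3, b2 & M3 ++ [:: nsw a2, nsw a3 & map nsw (mid ++ [:: b3; b2; b1])]]]]]].
    by rewrite /GDt; do 6 rewrite /= ?map_cat -?catA.
  have HGt : good (GDt ++ [:: b1]) by move: Hg; rewrite G2 => /good_cons.
  have HGt' : good GDt by apply: good_prefix HGt.
  apply: good_splice => //.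
  + have -> : map sw [:: a1, a2, a3 & mid] ++ [:: sw b3; sw b2] = map sw (a1 :: GDt).
      by rewrite /GDt; do 3 rewrite /= ?map_cat -?catA.
    rewrite good_sw; move: Hg; rewrite G1 -cats1; exact: good_prefix.
  + have -> : [:: a2, a3 & mid ++ [:: b3, b2 & M2 ++ [:: a2, a3 &
      mid ++ [:: b3, b2 & M3 ++ [:: nsw a2, nsw a3 & map nsw (mid ++ [:: b3; b2; b1])]]]]] =
      [:: a2, a3 & mid] ++ [:: b3, b2 & M2 ++ [:: a2, a3 &
      mid ++ [:: b3, b2 & M3 ++ [:: nsw a2, nsw a3 & map nsw (mid ++ [:: b3; b2; b1])]]]] by [].
    apply: good_splice => //.
    have -> : [:: a2, a3 & mid ++ [:: b3, b2 & M3 ++ [:: nsw a2, nsw a3 & map nsw (mid ++ [:: b3; b2; b1])]]] =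
      [:: a2, a3 & mid] ++ [:: b3, b2 & M3 ++ [:: nsw a2, nsw a3 & map nsw (mid ++ [:: b3; b2; b1])]] by [].
    apply: good_splice => //.
    have -> : [:: nsw a2, nsw a3 & map nsw (mid ++ [:: b3; b2; b1])] = map nsw (GDt ++ [:: b1]).
      by rewrite /GDt /= -catA.
    by rewrite good_nsw.
Qed.


Definition Inv m (a1 a2 a3 b3 b2 b1 hd lst : pt) :=
  [/\ Dl m != [::], head pt0 (Dl m) = hd, last pt0 (Dl m) = lst,
     exists mid, groups (Dl m) = [:: a1, a2, a3 & mid ++ [:: b3; b2; b1]]
   & good (groups (Dl m))].

Definition InvO m := Inv m dR dU dL dL dD dR dR dR.
Definition InvE m := Inv m dU dR dD dU dR dD dU dD.

Lemma inv1 : InvO 1.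
Proof.
split => //.
- exists [:: (0, 2); dR; dD; dR; dU; dR; (0, -2)].
  vm_compute; reflexivity.
Qed.

Lemma stepO m : InvO m -> InvE m.+1.
Proof.
case=> Hn Hh Hl [mid HG] Hg.
have [] := @step (Dl m) _ _ _ _ _ _ mid _ _ Hn Hh Hl HG Hg.
- by vm_compute.
- by vm_compute.
- by vm_compute.
rewrite -DlS => H1 H2 H3 [mid' H4] H5.
split => //.
exists mid'; rewrite H4.
  have -> : [:: nsw dL; nsw dD; nsw dR] = [:: dU; dR; dD] by vm_compute; reflexivity.
  by [].
Qed.

Lemma stepE m : InvE m -> InvO m.+1.
Proof.
case=> Hn Hh Hl [mid HG] Hg.
have [] := @step (Dl m) _ _ _ _ _ _ mid _ _ Hn Hh Hl HG Hg.
- by vm_compute.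
- by vm_compute.
- by vm_compute.
rewrite -DlS => H1 H2 H3 [mid' H4] H5.
split => //.
exists mid'; rewrite H4.
  have -> : [:: nsw dU; nsw dR; nsw dD] = [:: dL; dD; dR] by vm_compute; reflexivity.
  have -> : sw dD = dL by vm_compute; reflexivity.
  by [].
Qed.

Lemma invAll k : InvO k.*2.+1 /\ InvE k.*2.+2.
Proof.
elim: k => [|k [IH1 IH2]]; first by split; [exact: inv1 | exact: stepO inv1].
have H := @stepE _ IH2; split => //; exact: stepO.
Qed.

Lemma goodD m : good (groups (Dl m)).
Proof.
case: m => [|m]; first by vm_compute.
case: (invAll m./2) => [[_ _ _ _ H1] [_ _ _ _ H2]].
have Em : m.+1 = ((m./2).*2.+1 + odd m)%N.
  by rewrite -{1}(odd_double_half m) addnC addSn.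
rewrite Em; case: (odd m); rewrite ?addn1 ?addn0 //.

Qed.


Lemma uu_neq0 m : uu m != 0.
Proof. by elim: m => //= m IH; rewrite mulf_neq0 // invr_neq0. Qed.

Lemma cross_scale u a b : cross (scale u a) (scale u b) = (u * u) * cross a b.
Proof. by rewrite /cross /scale /=; ring. Qed.

Lemma add_scale u a b : scale u (padd a b) = padd (scale u a) (scale u b).
Proof. by rewrite /scale /padd /=; apply: pairE; ring. Qed.

Lemma goodT m : good (groups (edges (hilb_aux m))).
Proof.
have [_ He _ _] := hilbE m.
have Hk : uu m * uu m != 0 by rewrite mulf_neq0 // uu_neq0.
rewrite He (@groups_map _ _ (cross_scale (uu m)) Hk (add_scale (uu m))).
by rewrite (@good_map _ _ (cross_scale (uu m)) Hk) goodD.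
Qed.

Theorem mainTheorem11 (n : nat) : (1 <= n)%N ->
  forall k : nat, (2 <= k)%N -> (k <= Ninf n - 2)%N ->
    cross (tvec n k.-1) (tvec n k) != 0 /\
    kappa n k \in [:: 1; -1; 2; -2; 1/2; -(1/2); 3; 1/3] /\
    kappabar n k = 0.
Proof.
move=> _ k Hk2 HkN.
have Hg := goodT n.-1.
have [Hn He _ _] := hilbE n.-1.
have Hs : exists x y r, hilbert n = [:: x, y & r].
  move: He; rewrite /hilbert; case: (hilb_aux n.-1) => [|x [|y r]].
  - move=> /(congr1 size); rewrite size_map /=.
    by case: (n.-1) => [|m] //; rewrite DlS size_cat /= addnS.
  - move=> /(congr1 size); rewrite size_map /=.
    by case: (n.-1) => [|m] //; rewrite DlS size_cat /= addnS.
  - by move=> _; exists x, y, r.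
have [x [y [r Hxy]]] := Hs.
move: Hg; rewrite -/(hilbert n) Hxy -T_infl.
have := inflE x y r; rewrite -Hxy => Hinf.
rewrite Hinf /= => Hg.
set I := irec x y r in Hinf Hg.
set T := pairmap _ x I in Hg.
have HN : Ninf n = (size I).+1 by rewrite /Ninf Hinf.
have HT j : (1 <= j <= size I)%N -> tvec n j = nth pt0 T j.-1.
  case/andP => H1 H2.
  rewrite /tvec /rpt /T (@nth_pairmap _ pt0 _ pt0) ?prednK // ?Hinf //.
  by case: j H1 H2 => //= j _ H2; rewrite (ltn_trans (ltnSn j)) // ltnS.
case: k Hk2 HkN => [|[|j]] // _; rewrite HN subn2 /= => Hj.
have HsT : size T = size I by rewrite size_pairmap.
have Hjs : (j.+3 <= size I)%N.
  by move: Hj; case: (size I) => [|[|[|s]]] //.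
have := @good_nth T j Hg; rewrite HsT => /(_ Hjs).
rewrite /kappa /kappabar /= HT ?HT ?HT /=.
- case/and3P => H1 /eqP H2 H3; split => //; split => //.
  by rewrite H2 mul0r.
- by rewrite Hjs.
- by rewrite (@ltn_trans j.+2 j.+1).

- by rewrite (@ltn_trans j.+2 j) // (@ltn_trans j.+1).

Qed.
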